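(* Suppose $p_0$ has support $\{0,\dots,S\}$ with $S\in\mathbb N\setminus\{0\}$. Then with probability one there exists $n_0$ such that for all $n\ge n_0$ the support of $\hat p_n$ is either $\{0,\dots,S\}$ or $\{0,\dots,S+1\}$.
   Context: Let $\mathbb N=\{0,1,2,\dots\}$. For a real sequence $p$ and $k\ge1$ let $\Delta p(k)=p(k+1)-2p(k)+p(k-1)$; $p$ is convex if $\Delta p(k)\ge0$ for all $k\ge1$; $\mathcal C$ is the set of convex sequences with $\sum_kp(k)^2<\infty$. Let $p_0$ be a convex probability mass function on $\mathbb N$ (so $p_0(k)>0$ for $k\le S$ and $p_0(k)=0$ for $k\ge S+1$). Let $X_1,X_2,\dots$ be i.i.d. with pmf $p_0$, $p_n(j)=\frac1n\sum_{i=1}^n\mathbb 1\{X_i=j\}$, and let the least squares estimator $\hat p_n$ be the unique minimizer over $\mathcal C$ of $\frac12\sum_{j\in\mathbb N}(p_n(j)-p(j))^2$. The support of a sequence $p$ is $\{k: p(k)\neq 0\}$. *)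

(* Defs.v *)
From Stdlib Require Import Reals Lra Lia.
Open Scope R_scope.

Definition Delta (p : nat -> R) (k : nat) : R := p (S k) - 2 * p k + p (pred k).

Definition convex_seq (p : nat -> R) : Prop :=
  forall k : nat, (1 <= k)%nat -> 0 <= Delta p k.

Definition square_summable (p : nat -> R) : Prop :=
  exists l : R, infinite_sum (fun k => p k ^ 2) l.

Definition in_C (p : nat -> R) : Prop := convex_seq p /\ square_summable p.

Definition support (p : nat -> R) (k : nat) : Prop := p k <> 0.

Definition is_pmf (p : nat -> R) : Prop :=
  (forall k, 0 <= p k) /\ infinite_sum p 1.

Definition ls_terms (pn p : nat -> R) (j : nat) : R := / 2 * (pn j - p j) ^ 2.

Definition is_LSE (pn p : nat -> R) : Prop :=
  in_C p /\
  (exists a, infinite_sum (ls_terms pn p) a) /\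
  forall q : nat -> R, in_C q ->
    forall a b, infinite_sum (ls_terms pn p) a ->
                infinite_sum (ls_terms pn q) b -> a <= b.

Definition sigma_algebra {Omega : Type} (F : (Omega -> Prop) -> Prop) : Prop :=
  F (fun _ => True) /\
  (forall A, F A -> F (fun w => ~ A w)) /\
  (forall A : nat -> Omega -> Prop, (forall n, F (A n)) ->
       F (fun w => exists n, A n w)).

Definition is_prob_space {Omega : Type} (F : (Omega -> Prop) -> Prop)
  (P : (Omega -> Prop) -> R) : Prop :=
  sigma_algebra F /\
  (forall A, F A -> 0 <= P A) /\
  P (fun _ => True) = 1 /\
  (forall A : nat -> Omega -> Prop,
      (forall n, F (A n)) ->
      (forall n m w, n <> m -> A n w -> A m w -> False) ->
      infinite_sum (fun n => P (A n)) (P (fun w => exists n, A n w))).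

Fixpoint prodR (f : nat -> R) (n : nat) : R :=
  match n with
  | O => 1
  | S m => prodR f m * f m
  end.

(* X_1, X_2, ... (indexed here from 0) are i.i.d. N-valued random variables
   with pmf p0: each event {X_i = j} is measurable and, for every n, the joint
   law of (X_0, ..., X_{n-1}) is the product law p0^{⊗n}. *)
Definition iid_with_pmf {Omega : Type} (F : (Omega -> Prop) -> Prop)
  (P : (Omega -> Prop) -> R) (X : nat -> Omega -> nat) (p0 : nat -> R) : Prop :=
  (forall i j, F (fun w => X i w = j)) /\
  (forall (n : nat) (j : nat -> nat),
      P (fun w => forall i, (i < n)%nat -> X i w = j i) =
      prodR (fun i => p0 (j i)) n).

Fixpoint count_obs {Omega : Type} (X : nat -> Omega -> nat) (w : Omega)
  (n j : nat) : nat :=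
  match n with
  | O => O
  | S m => (count_obs X w m j + (if Nat.eqb (X m w) j then 1 else 0))%nat
  end.

Definition empirical {Omega : Type} (X : nat -> Omega -> nat) (w : Omega)
  (n : nat) (j : nat) : R :=
  INR (count_obs X w n j) / INR n.

(* Main.v *)
Require Import Defs.
From Stdlib Require Import Reals.
Open Scope R_scope.
From Stdlib Require Import Lra Lia FunctionalExtensionality PropExtensionality Classical ClassicalEpsilon IndefiniteDescription.
Require Import Defs.

Lemma sum_zero_tail (f : nat -> R) (M N : nat) :
  (forall i, (M < i)%nat -> f i = 0) -> (M <= N)%nat -> sum_f_R0 f N = sum_f_R0 f M.
Proof.
  intros Hf HMN. induction HMN as [|N HMN IH]; [reflexivity|].
  simpl. rewrite IH, (Hf (S N)) by lia. ring.
Qed.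

Lemma inf_sum_fin (f : nat -> R) (M : nat) :
  (forall i, (M < i)%nat -> f i = 0) -> infinite_sum f (sum_f_R0 f M).
Proof.
  intros Hf eps Heps. exists M. intros n Hn.
  rewrite (sum_zero_tail f M n Hf Hn). unfold Rdist. rewrite Rminus_diag, Rabs_R0. lra.
Qed.

Lemma term_le_sum (f : nat -> R) (i N : nat) :
  (forall k, 0 <= f k) -> (i <= N)%nat -> f i <= sum_f_R0 f N.
Proof.
  intros Hf HiN. induction HiN as [|N HiN IH].
  - destruct i; simpl; [lra|]. pose proof (cond_pos_sum f i Hf). lra.
  - simpl. specialize (Hf (S N)). lra.
Qed.

Lemma cv_ge (u : nat -> R) (l c : R) (N0 : nat) :
  Un_cv u l -> (forall n, (N0 <= n)%nat -> c <= u n) -> c <= l.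
Proof.
  intros Hu Hc. destruct (Rle_or_lt c l) as [H|H]; [exact H|].
  destruct (Hu (c - l)) as [N HN]; [lra|].
  specialize (HN (max N N0) ltac:(lia)). specialize (Hc (max N N0) ltac:(lia)).
  unfold Rdist in HN. apply Rabs_def2 in HN. lra.
Qed.

Lemma cv_le (u : nat -> R) (l c : R) (N0 : nat) :
  Un_cv u l -> (forall n, (N0 <= n)%nat -> u n <= c) -> l <= c.
Proof.
  intros Hu Hc. destruct (Rle_or_lt l c) as [H|H]; [exact H|].
  destruct (Hu (l - c)) as [N HN]; [lra|].
  specialize (HN (max N N0) ltac:(lia)). specialize (Hc (max N N0) ltac:(lia)).
  unfold Rdist in HN. apply Rabs_def2 in HN. lra.
Qed.

Lemma cv_const (c : R) : Un_cv (fun _ => c) c.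
Proof. intros eps Heps. exists O. intros n _. unfold Rdist. rewrite Rminus_diag, Rabs_R0. lra. Qed.

Lemma sum_cv (f : nat -> nat -> R) (g : nat -> R) (N : nat) :
  (forall i, Un_cv (fun n => f n i) (g i)) ->
  Un_cv (fun n => sum_f_R0 (f n) N) (sum_f_R0 g N).
Proof.
  intros H. induction N as [|N IH]; simpl; [apply H|].
  apply CV_plus; [exact IH | apply H].
Qed.

Lemma sum_indic (f : nat -> R) (j M : nat) : (j <= M)%nat ->
  sum_f_R0 (fun i => if (i <=? j)%nat then f i else 0) M = sum_f_R0 f j.
Proof.
  intros H. induction H as [|M H IH].
  - apply sum_eq. intros i Hi. destruct (Nat.leb_spec i j); [reflexivity|lia].
  - rewrite tech5, IH. destruct (Nat.leb_spec (S M) j); [lia|ring].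
Qed.

Lemma partial_le_lim (f : nat -> R) (l : R) (N : nat) :
  infinite_sum f l -> (forall k, 0 <= f k) -> sum_f_R0 f N <= l.
Proof.
  intros Hl Hf. apply growing_ineq; [|exact Hl].
  intro n. simpl. specialize (Hf (S n)). lra.
Qed.

Lemma terms_to_0 (f : nat -> R) (l : R) : infinite_sum f l ->
  forall eps, 0 < eps -> exists N, forall n, (N <= n)%nat -> Rabs (f n) < eps.
Proof.
  intros Hl eps Heps. destruct (Hl (eps/2)) as [N HN]; [lra|].
  exists (S N). intros n Hn. destruct n as [|n]; [lia|].
  pose proof (HN n ltac:(lia)) as H1. pose proof (HN (S n) ltac:(lia)) as H2.
  unfold Rdist in *. simpl in H2.
  replace (f (S n)) with ((sum_f_R0 f n + f (S n) - l) - (sum_f_R0 f n - l)) by ring.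
  eapply Rle_lt_trans; [apply Rabs_triang|]. rewrite Rabs_Ropp. lra.
Qed.

Definition Tj (j : nat) (i : nat) : R := INR (j - i).

Lemma Delta_T (j k : nat) : (1 <= k)%nat ->
  Delta (Tj j) k = if Nat.eqb k j then 1 else 0.
Proof.
  intros Hk. unfold Delta, Tj.
  destruct (Nat.eqb_spec k j) as [E|E].
  - subst j. replace (k - S k)%nat with 0%nat by lia. replace (k - k)%nat with 0%nat by lia.
    replace (k - pred k)%nat with 1%nat by lia. simpl. lra.
  - destruct (Nat.lt_ge_cases k j) as [L|L].
    + replace (j - k)%nat with (S (j - S k)) by lia.
      replace (j - pred k)%nat with (S (S (j - S k))) by lia.
      rewrite !S_INR. lra.
    + replace (j - S k)%nat with 0%nat by lia. replace (j - k)%nat with 0%nat by lia.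
      replace (j - pred k)%nat with 0%nat by lia. simpl. lra.
Qed.

Lemma Delta_T_nonneg (j k : nat) : (1 <= k)%nat -> 0 <= Delta (Tj j) k.
Proof. intros Hk. rewrite Delta_T by exact Hk. destruct (Nat.eqb k j); lra. Qed.

Lemma Tj_zero (j i : nat) : (j <= i)%nat -> Tj j i = 0.
Proof. intros H. unfold Tj. replace (j - i)%nat with 0%nat by lia. reflexivity. Qed.

Lemma convex_mono (r : nat -> R) : convex_seq r ->
  forall k m, r (S k) - r k <= r (S (k + m)%nat) - r (k + m)%nat.
Proof.
  intros Hc k m. induction m as [|m IH].
  - rewrite Nat.add_0_r. lra.
  - pose proof (Hc (S (k + m)) ltac:(lia)) as H. unfold Delta in H. simpl in H.
    replace (k + S m)%nat with (S (k + m)) by lia. lra.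
Qed.

Lemma convex_l2_props (r : nat -> R) : convex_seq r -> square_summable r ->
  (forall k, r (S k) <= r k) /\ (forall k, 0 <= r k).
Proof.
  intros Hc [l Hl].
  pose proof (terms_to_0 _ _ Hl) as Ht.
  assert (Hd : forall k, r (S k) <= r k).
  { intro k. destruct (Rle_or_lt (r (S k)) (r k)) as [H|H]; [exact H|]. exfalso.
    set (d := r (S k) - r k).
    assert (Hgrow : forall m, r k + INR m * d <= r (k + m)%nat).
    { induction m as [|m IH].
      - simpl. rewrite Nat.add_0_r. lra.
      - pose proof (convex_mono r Hc k m) as H2. rewrite S_INR.
        replace (k + S m)%nat with (S (k + m)) by lia. unfold d in *. lra. }
    destruct (INR_archimed d (1 - r k)) as [m Hm]; [unfold d; lra|].
    destruct (Ht 1 ltac:(lra)) as [N HN].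
    set (n := max N (k + m)).
    specialize (HN n ltac:(unfold n; lia)).
    specialize (Hgrow (n - k)%nat). replace (k + (n - k))%nat with n in Hgrow by (unfold n; lia).
    assert (INR m <= INR (n - k)) by (apply le_INR; unfold n; lia).
    assert (1 < r n).
    { assert (INR m * d <= INR (n - k) * d) by (apply Rmult_le_compat_r; unfold d; lra). lra. }
    rewrite Rabs_right in HN by (apply Rle_ge; apply pow2_ge_0). nra. }
  split; [exact Hd|].
  intro k. destruct (Rle_or_lt 0 (r k)) as [H|H]; [exact H|]. exfalso.
  assert (Hdec : forall m, r (k + m)%nat <= r k).
  { induction m as [|m IH]; [rewrite Nat.add_0_r; lra|].
    replace (k + S m)%nat with (S (k + m)) by lia. specialize (Hd (k + m)%nat). lra. }
  destruct (Ht (r k ^ 2)) as [N HN]; [nra|].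
  specialize (HN (k + N)%nat ltac:(lia)). specialize (Hdec N).
  rewrite Rabs_right in HN by (apply Rle_ge; apply pow2_ge_0). nra.
Qed.

Definition inK (s : nat) (p : nat -> R) : Prop :=
  convex_seq p /\ forall i, (S s < i)%nat -> p i = 0.

Definition Qf (s : nat) (q p : nat -> R) : R := sum_f_R0 (fun i => (q i - p i)^2) (S s).

Lemma Delta_comb (a b : R) (p r : nat -> R) (k : nat) :
  Delta (fun i => a * p i + b * r i) k = a * Delta p k + b * Delta r k.
Proof. unfold Delta. ring. Qed.

Lemma inK_comb s p r a b : inK s p -> inK s r -> 0 <= a -> 0 <= b ->
  inK s (fun i => a * p i + b * r i).
Proof.
  intros [Hp Zp] [Hr Zr] Ha Hb. split.
  - intros k Hk. rewrite Delta_comb. specialize (Hp k Hk). specialize (Hr k Hk). nra.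
  - intros i Hi. rewrite Zp, Zr by exact Hi. ring.
Qed.

Lemma sq_lt_abs (x y : R) : 0 < y -> x^2 < y^2 -> Rabs x < y.
Proof. intros Hy H. unfold Rabs. destruct (Rcase_abs x); nra. Qed.

Lemma sq_le_abs (x y : R) : 0 <= y -> x^2 <= y^2 -> Rabs x <= y.
Proof. intros Hy H. unfold Rabs. destruct (Rcase_abs x); nra. Qed.

Lemma Qf_nonneg s q p : 0 <= Qf s q p.
Proof. apply cond_pos_sum. intro. apply pow2_ge_0. Qed.

Lemma exist_min s q : exists p, inK s p /\ forall r, inK s r -> Qf s q p <= Qf s q r.
Proof.
  set (E := fun y => exists r, inK s r /\ y = - Qf s q r).
  assert (HK0 : inK s (fun _ => 0)).
  { split; [intros k _; unfold Delta; lra | reflexivity]. }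
  assert (Hb : bound E).
  { exists 0. intros y [r [_ ->]]. pose proof (Qf_nonneg s q r). lra. }
  assert (Hne : exists y, E y) by (exists (- Qf s q (fun _ => 0)); exists (fun _ => 0); auto).
  destruct (completeness E Hb Hne) as [m [Hub Hlub]].
  set (d := - m).
  assert (F1 : forall r, inK s r -> d <= Qf s q r).
  { intros r Hr. assert (E (- Qf s q r)) by (exists r; auto). specialize (Hub _ H). unfold d. lra. }
  assert (F2 : forall n : nat, exists r, inK s r /\ Qf s q r < d + / (INR n + 1)).
  { intro n. apply Classical_Prop.NNPP. intro Hn.
    assert (Hpos : 0 < / (INR n + 1)) by (apply Rinv_0_lt_compat; pose proof (pos_INR n); lra).
    assert (is_upper_bound E (m - / (INR n + 1))).
    { intros y [r [Hr ->]]. destruct (Rle_or_lt (d + / (INR n + 1)) (Qf s q r)) as [H|H].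
      - unfold d in H. lra.
      - exfalso. apply Hn. exists r. auto. }
    specialize (Hlub _ H). lra. }
  set (ps := fun n => proj1_sig (constructive_indefinite_description _ (F2 n))).
  assert (Hps : forall n, inK s (ps n) /\ Qf s q (ps n) < d + / (INR n + 1)).
  { intro n. unfold ps. destruct (constructive_indefinite_description _ (F2 n)) as [r Hr]. exact Hr. }
  assert (Hcau : forall n k i, (ps n i - ps k i)^2 <= 2 * / (INR n + 1) + 2 * / (INR k + 1)).
  { intros n k i.
    destruct (Hps n) as [Kn Qn]. destruct (Hps k) as [Kk Qk].
    assert (Km : inK s (fun j => /2 * ps n j + /2 * ps k j)) by (apply inK_comb; auto; lra).
    pose proof (F1 _ Km) as Qm.
    assert (Hid : sum_f_R0 (fun j => (ps n j - ps k j)^2) (S s) =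
       2 * Qf s q (ps n) + 2 * Qf s q (ps k) - 4 * Qf s q (fun j => /2 * ps n j + /2 * ps k j)).
    { unfold Qf. rewrite !scal_sum, <- sum_plus, <- minus_sum. apply sum_eq. intros. field. }
    destruct (Nat.le_gt_cases i (S s)) as [Hi|Hi].
    - pose proof (term_le_sum (fun j => (ps n j - ps k j)^2) i (S s) ltac:(intro; apply pow2_ge_0) Hi) as T.
      cbv beta in T. lra.
    - rewrite (proj2 Kn i Hi), (proj2 Kk i Hi).
      assert (0 < / (INR n + 1)) by (apply Rinv_0_lt_compat; pose proof (pos_INR n); lra).
      assert (0 < / (INR k + 1)) by (apply Rinv_0_lt_compat; pose proof (pos_INR k); lra).
      simpl. lra. }
  assert (Hcc : forall i, Cauchy_crit (fun n => ps n i)).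
  { intros i eps Heps.
    destruct (INR_archimed (eps^2) 4) as [N HN]; [nra|].
    exists N. intros n k Hn Hk. unfold Rdist.
    pose proof (Hcau n k i) as H.
    assert (INR N <= INR n) by (apply le_INR; lia). assert (INR N <= INR k) by (apply le_INR; lia).
    assert (HnN : / (INR n + 1) <= / (INR N + 1)).
    { apply Rinv_le_contravar; [pose proof (pos_INR N); lra | lra]. }
    assert (HkN : / (INR k + 1) <= / (INR N + 1)).
    { apply Rinv_le_contravar; [pose proof (pos_INR N); lra | lra]. }
    assert (4 * / (INR N + 1) < eps ^ 2).
    { pose proof (pos_INR N). apply (Rmult_lt_reg_r (INR N + 1)); [lra|].
      rewrite Rmult_assoc, Rinv_l by lra. nra. }
    assert (Hsq : (ps n i - ps k i)^2 < eps^2) by lra.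
    apply sq_lt_abs; [lra|exact Hsq]. }
  set (pstar := fun i => proj1_sig (R_complete _ (Hcc i))).
  assert (Hlim : forall i, Un_cv (fun n => ps n i) (pstar i)).
  { intro i. unfold pstar. destruct (R_complete _ (Hcc i)) as [l Hl]. exact Hl. }
  assert (HK : inK s pstar).
  { split.
    - intros k Hk. unfold Delta.
      apply (cv_ge (fun n => ps n (S k) - 2 * ps n k + ps n (pred k)) _ 0 O).
      + apply CV_plus; [apply CV_minus|]; [apply Hlim| |apply Hlim].
        apply CV_mult; [apply cv_const|apply Hlim].
      + intros n _. apply (proj1 (proj1 (Hps n)) k Hk).
    - intros i Hi. apply (UL_sequence (fun n => ps n i)); [apply Hlim|].
      replace (fun n => ps n i) with (fun _ : nat => 0).
      + apply cv_const.
      + apply FunctionalExtensionality.functional_extensionality. intro n.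
        symmetry. apply (proj2 (proj1 (Hps n)) i Hi). }
  exists pstar. split; [exact HK|].
  assert (HQ : Un_cv (fun n => Qf s q (ps n)) (Qf s q pstar)).
  { unfold Qf. apply (sum_cv (fun n i => (q i - ps n i)^2)). intro i. simpl.
    apply CV_mult; [|apply CV_mult; [|apply cv_const]];
      apply CV_minus; (apply cv_const || apply Hlim). }
  assert (HQd : forall eps, 0 < eps -> Qf s q pstar <= d + eps).
  { intros eps He. destruct (INR_archimed eps 1) as [N HN]; [lra|].
    apply (cv_le _ _ _ N HQ). intros n Hn. pose proof (proj2 (Hps n)) as H.
    assert (INR N <= INR n) by (apply le_INR; lia).
    assert (/ (INR n + 1) <= eps).
    { pose proof (pos_INR n). apply (Rmult_le_reg_r (INR n + 1)); [lra|].
      rewrite Rinv_l by lra. nra. }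
    lra. }
  intros r Hr. specialize (F1 r Hr).
  destruct (Rle_or_lt (Qf s q pstar) d) as [H|H]; [lra|].
  specialize (HQd ((Qf s q pstar - d)/2) ltac:(lra)). lra.
Qed.

Lemma Delta_add (p v : nat -> R) (t : R) (k : nat) :
  Delta (fun i => p i + t * v i) k = Delta p k + t * Delta v k.
Proof. unfold Delta. ring. Qed.

Lemma kkt_dir s q p v t0 :
  (forall r, inK s r -> Qf s q p <= Qf s q r) -> 0 < t0 ->
  (forall t, 0 < t -> t <= t0 -> inK s (fun i => p i + t * v i)) ->
  sum_f_R0 (fun i => (q i - p i) * v i) (S s) <= 0.
Proof.
  intros Hmin Ht0 HK.
  set (A := sum_f_R0 (fun i => (q i - p i) * v i) (S s)).
  set (B := sum_f_R0 (fun i => v i ^ 2) (S s)).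
  assert (HB : 0 <= B) by (apply cond_pos_sum; intro; apply pow2_ge_0).
  assert (Hid : forall t, Qf s q (fun i => p i + t * v i) = Qf s q p + (-2 * t) * A + t^2 * B).
  { intro t. unfold Qf, A, B. rewrite !scal_sum, <- !sum_plus. apply sum_eq. intros. ring. }
  destruct (Rle_or_lt A 0) as [H|H]; [exact H|]. exfalso.
  set (t := Rmin t0 (A / (B + 1))).
  assert (Hq : 0 < A / (B + 1)) by (apply Rdiv_lt_0_compat; lra).
  assert (Htp : 0 < t) by (unfold t; apply Rmin_glb_lt; lra).
  assert (Htl : t <= t0) by (unfold t; apply Rmin_l).
  assert (Htl2 : t <= A / (B + 1)) by (unfold t; apply Rmin_r).
  specialize (Hmin _ (HK t Htp Htl)). rewrite Hid in Hmin.
  assert (HtB : t * (B + 1) <= A).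
  { apply (Rmult_le_compat_r (B + 1)) in Htl2; [|lra].
    unfold Rdiv in Htl2. rewrite Rmult_assoc, Rinv_l, Rmult_1_r in Htl2 by lra. exact Htl2. }
  nra.
Qed.

Definition Ej (e : nat -> R) (M j : nat) : R := sum_f_R0 (fun i => e i * Tj j i) M.

Lemma E_0 e M : Ej e M 0 = 0.
Proof. unfold Ej. rewrite (sum_eq _ (fun _ => 0)). - rewrite sum_cte. ring.
  - intros. unfold Tj. simpl. ring. Qed.

Lemma E_rec e M j : (j <= M)%nat -> Ej e M (S j) = Ej e M j + sum_f_R0 e j.
Proof.
  intros H. unfold Ej. rewrite <- (sum_indic e j M H), <- sum_plus. apply sum_eq.
  intros i Hi. unfold Tj. destruct (Nat.leb_spec i j) as [L|L].
  - replace (S j - i)%nat with (S (j - i)) by lia. rewrite S_INR. ring.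
  - replace (S j - i)%nat with 0%nat by lia. replace (j - i)%nat with 0%nat by lia. simpl. ring.
Qed.

Fixpoint Gsum (E : nat -> R) (r : nat -> R) (n : nat) : R :=
  match n with
  | O => 0
  | S k => Gsum E r k + E (S k) * Delta r (S k)
  end.

Lemma abel e M r n : (S n <= M)%nat ->
  sum_f_R0 (fun i => e i * r i) (S n) =
  sum_f_R0 e (S n) * r (S n) - Ej e M (S n) * (r (S n) - r n) + Gsum (Ej e M) r n.
Proof.
  induction n as [|n IH]; intros H.
  - rewrite E_rec by lia. rewrite E_0. simpl. ring.
  - rewrite tech5, IH by lia. rewrite (E_rec e M (S n)) by lia.
    simpl Gsum. unfold Delta. simpl pred. rewrite (tech5 e (S n)). ring.
Qed.

Lemma Gsum_nonpos E r n : (forall k, (1 <= k <= n)%nat -> E k <= 0) -> convex_seq r ->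
  Gsum E r n <= 0.
Proof.
  intros HE Hc. induction n as [|n IH]; simpl; [lra|].
  assert (Gsum E r n <= 0) by (apply IH; intros; apply HE; lia).
  pose proof (HE (S n) ltac:(lia)). pose proof (Hc (S n) ltac:(lia)). nra.
Qed.

Lemma ls_sum q p N : sum_f_R0 (ls_terms q p) N = / 2 * sum_f_R0 (fun i => (q i - p i)^2) N.
Proof. rewrite scal_sum. apply sum_eq. intros. unfold ls_terms. ring. Qed.

Lemma abs_le_elim (x c : R) : Rabs x <= c -> - c <= x <= c.
Proof. unfold Rabs. destruct (Rcase_abs x); intros; lra. Qed.

Theorem det_main (p0 : nat -> R) (s : nat) :
  (forall k, 0 <= p0 k) -> convex_seq p0 -> (forall k, p0 k <> 0 <-> (k <= s)%nat) ->
  exists eta, 0 < eta /\ forall q : nat -> R,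
    (forall i, (s < i)%nat -> q i = 0) ->
    (forall i, (i <= s)%nat -> Rabs (q i - p0 i) < eta) ->
    (exists p, is_LSE q p) /\
    forall p, is_LSE q p ->
      (forall k, support p k <-> (k <= s)%nat) \/
      (forall k, support p k <-> (k <= s + 1)%nat).
Proof.
  intros Hp0 Hc0 Hs0.
  set (a0 := p0 s).
  assert (Ha0 : 0 < a0).
  { unfold a0. destruct (Rle_lt_or_eq_dec 0 (p0 s) (Hp0 s)) as [H|H]; [exact H|].
    exfalso. apply (proj2 (Hs0 s) (le_n s)). auto. }
  set (n2 := INR (S (S s))).
  assert (Hn2 : 1 <= n2) by (unfold n2; rewrite S_INR; pose proof (pos_INR (S s)); lra).
  set (eta := a0 / (8 * n2)).
  assert (Heta : 0 < eta) by (unfold eta; apply Rdiv_lt_0_compat; lra).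
  assert (Heta8 : eta <= a0 / 8).
  { unfold eta. apply Rmult_le_compat_l; [lra|]. apply Rinv_le_contravar; lra. }
  assert (Heta2 : n2 * eta ^ 2 <= (a0 / 8) ^ 2).
  { unfold eta. replace (n2 * (a0 / (8 * n2)) ^ 2) with ((a0 / 8) ^ 2 / n2) by (field; lra).
    apply (Rmult_le_reg_r n2); [lra|]. unfold Rdiv. rewrite Rmult_assoc, Rinv_l by lra.
    pose proof (pow2_ge_0 (a0 / 8)). nra. }
  exists eta. split; [exact Heta|].
  intros q Hq0 Hqc.
  destruct (exist_min s q) as [ps [HK Hmin]].
  set (e := fun i => q i - ps i).
  assert (Hp0z : forall i, (s < i)%nat -> p0 i = 0).
  { intros i Hi. destruct (Req_dec (p0 i) 0) as [H|H]; [exact H|].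
    apply Hs0 in H. lia. }
  assert (Hp0K : inK s p0).
  { split; [exact Hc0|]. intros i Hi. apply Hp0z. lia. }
  assert (HQ : Qf s q ps <= (a0 / 8) ^ 2).
  { eapply Rle_trans; [apply Hmin; exact Hp0K|].
    eapply Rle_trans; [|exact Heta2].
    unfold Qf, n2. rewrite Rmult_comm, <- sum_cte. apply sum_Rle. intros i Hi.
    destruct (Nat.le_gt_cases i s) as [L|L].
    - specialize (Hqc i L). apply Rabs_def2 in Hqc. cbv beta. nra.
    - cbv beta. rewrite Hq0 by exact L. rewrite Hp0z by exact L. pose proof (pow2_ge_0 eta). lra. }
  assert (Hclose : forall i, (i <= S s)%nat -> Rabs (q i - ps i) <= a0 / 8).
  { intros i Hi. apply sq_le_abs; [lra|]. eapply Rle_trans; [|exact HQ]. unfold Qf.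
    exact (term_le_sum (fun i => (q i - ps i)^2) i (S s) (fun _ => pow2_ge_0 _) Hi). }
  assert (HpsS : ps (S s) <= a0 / 8).
  { pose proof (Hclose (S s) (le_n _)) as H. rewrite Hq0 in H by lia.
    apply abs_le_elim in H. lra. }
  assert (Hpss : 3 * a0 / 4 <= ps s).
  { pose proof (Hclose s ltac:(lia)) as H. apply abs_le_elim in H.
    pose proof (Hqc s (le_n _)) as H2. apply Rabs_def2 in H2. fold a0 in H2. lra. }
  assert (HD : 0 < Delta ps (S s)).
  { unfold Delta. simpl pred. rewrite (proj2 HK (S (S s))) by lia. lra. }
  assert (Hneg : forall j, (j <= S (S s))%nat -> Ej e (S s) j <= 0).
  { intros j Hj. unfold Ej, e. apply (kkt_dir s q ps (Tj j) 1 Hmin); [lra|].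
    intros t Ht1 Ht2. split.
    - intros k Hk. rewrite Delta_add. pose proof (Delta_T_nonneg j k Hk).
      pose proof (proj1 HK k Hk). nra.
    - intros i Hi. rewrite (proj2 HK i Hi), Tj_zero by lia. ring. }
  assert (Hopp : forall v, sum_f_R0 (fun i => (q i - ps i) * ((-1) * v i)) (S s)
                      = - sum_f_R0 (fun i => e i * v i) (S s)).
  { intro v. replace (- sum_f_R0 (fun i => e i * v i) (S s))
      with ((-1) * sum_f_R0 (fun i => e i * v i) (S s)) by ring.
    rewrite scal_sum. apply sum_eq. intros. unfold e. ring. }
  assert (HDm : forall v k, Delta (fun i => (-1) * v i) k = - Delta v k).
  { intros. unfold Delta. ring. }
  assert (Hzero : Ej e (S s) (S s) = 0).
  { enough (0 <= Ej e (S s) (S s)) by (pose proof (Hneg (S s) ltac:(lia)); lra).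
    pose proof (kkt_dir s q ps (fun i => (-1) * Tj (S s) i) (Delta ps (S s)) Hmin HD) as H.
    cbv beta in H. rewrite Hopp in H. unfold Ej.
    enough (- sum_f_R0 (fun i => e i * Tj (S s) i) (S s) <= 0) by lra.
    apply H. intros t Ht1 Ht2. split.
    - intros k Hk. rewrite Delta_add, HDm, Delta_T by exact Hk.
      pose proof (proj1 HK k Hk). destruct (Nat.eqb_spec k (S s)) as [->|_]; lra.
    - intros i Hi. rewrite (proj2 HK i Hi), Tj_zero by lia. ring. }
  assert (Hpp : 0 <= sum_f_R0 (fun i => e i * ps i) (S s)).
  { pose proof (kkt_dir s q ps (fun i => (-1) * ps i) 1 Hmin ltac:(lra)) as H.
    cbv beta in H. rewrite Hopp in H.
    enough (- sum_f_R0 (fun i => e i * ps i) (S s) <= 0) by lra.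
    apply H. intros t Ht1 Ht2. split.
    - intros k Hk. rewrite Delta_add, HDm. pose proof (proj1 HK k Hk). nra.
    - intros i Hi. rewrite (proj2 HK i Hi). ring. }
  assert (Her : forall r, convex_seq r -> 0 <= r (S s) ->
             sum_f_R0 (fun i => e i * r i) (S s) <= 0).
  { intros r Hr Hr0. rewrite (abel e (S s) r s (le_n _)). rewrite Hzero.
    assert (Hce : sum_f_R0 e (S s) <= 0).
    { pose proof (E_rec e (S s) (S s) (le_n _)) as H. rewrite Hzero in H.
      pose proof (Hneg (S (S s)) (le_n _)). lra. }
    pose proof (Gsum_nonpos (Ej e (S s)) r s (fun k Hk => Hneg k ltac:(lia)) Hr).
    nra. }
  assert (Hez : forall i, (S s < i)%nat -> e i = 0).
  { intros i Hi. unfold e. rewrite Hq0 by lia. rewrite (proj2 HK i Hi). ring. }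
  assert (Hkey : forall r, convex_seq r -> 0 <= r (S s) -> forall N, (S s <= N)%nat ->
     Qf s q ps + sum_f_R0 (fun i => (ps i - r i)^2) N <= sum_f_R0 (fun i => (q i - r i)^2) N).
  { intros r Hr Hr0 N HN.
    assert (H1 : sum_f_R0 (fun i => (q i - r i)^2) N = sum_f_R0 (fun i => e i ^2) N
       + 2 * sum_f_R0 (fun i => e i * ps i - e i * r i) N + sum_f_R0 (fun i => (ps i - r i)^2) N).
    { rewrite scal_sum, <- !sum_plus. apply sum_eq. intros. unfold e. ring. }
    rewrite H1.
    rewrite (sum_zero_tail (fun i => e i ^ 2) (S s) N) by
      (try exact HN; intros i Hi; cbv beta; rewrite Hez by exact Hi; ring).
    rewrite (sum_zero_tail (fun i => e i * ps i - e i * r i) (S s) N) by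
      (try exact HN; intros i Hi; cbv beta; rewrite Hez by exact Hi; ring).
    rewrite minus_sum.
    change (Qf s q ps) with (sum_f_R0 (fun i => e i ^ 2) (S s)).
    pose proof (Her r Hr Hr0). lra. }
  assert (HpsC : in_C ps).
  { split; [exact (proj1 HK)|]. exists (sum_f_R0 (fun k => ps k ^ 2) (S s)).
    apply inf_sum_fin. intros i Hi. rewrite (proj2 HK i Hi). ring. }
  destruct (convex_l2_props ps (proj1 HK) (proj2 HpsC)) as [Hdec Hnn].
  set (a := sum_f_R0 (ls_terms q ps) (S s)).
  assert (Ha : infinite_sum (ls_terms q ps) a).
  { apply inf_sum_fin. intros i Hi. unfold ls_terms. rewrite Hq0, (proj2 HK i Hi) by lia. ring. }
  assert (Haq : a = / 2 * Qf s q ps) by (unfold a; rewrite ls_sum; reflexivity).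
  assert (HLSE : is_LSE q ps).
  { split; [exact HpsC|]. split; [exists a; exact Ha|].
    intros r Hr a' b Ha' Hb. rewrite (uniqueness_sum _ _ _ Ha' Ha).
    destruct (convex_l2_props r (proj1 Hr) (proj2 Hr)) as [_ Hrnn].
    apply (cv_ge _ _ _ (S s) Hb). intros N HN. rewrite ls_sum, Haq.
    pose proof (Hkey r (proj1 Hr) (Hrnn _) N HN).
    assert (0 <= sum_f_R0 (fun i => (ps i - r i)^2) N)
      by (apply cond_pos_sum; intro; apply pow2_ge_0).
    lra. }
  split; [exists ps; exact HLSE|].
  intros p Hp.
  assert (Hpeq : forall k, p k = ps k).
  { destruct Hp as [HpC [[b Hb] Hpmin]].
    pose proof (Hpmin ps HpsC b a Hb Ha) as Hba.
    destruct (convex_l2_props p (proj1 HpC) (proj2 HpC)) as [_ Hpnn].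
    intro k. set (N := max k (S s)).
    assert (Hnt : forall j, 0 <= ls_terms q p j).
    { intro j. unfold ls_terms. pose proof (pow2_ge_0 (q j - p j)). lra. }
    pose proof (partial_le_lim _ _ N Hb Hnt) as H1.
    rewrite ls_sum in H1.
    pose proof (Hkey p (proj1 HpC) (Hpnn _) N ltac:(unfold N; lia)) as H2.
    pose proof (term_le_sum (fun i => (ps i - p i)^2) k N (fun _ => pow2_ge_0 _)
                  ltac:(unfold N; lia)) as H3.
    cbv beta in H3.
    assert ((ps k - p k)^2 <= 0) by lra.
    assert (ps k - p k = 0) by nra. lra. }
  assert (Hmon : forall k m, ps (k + m)%nat <= ps k).
  { intros k m. induction m as [|m IH]; [rewrite Nat.add_0_r; lra|].
    replace (k + S m)%nat with (S (k + m)) by lia. specialize (Hdec (k + m)%nat). lra. }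
  assert (Hpos : forall k, (k <= s)%nat -> 0 < ps k).
  { intros k Hk. specialize (Hmon k (s - k)%nat).
    replace (k + (s - k))%nat with s in Hmon by lia. lra. }
  unfold support.
  destruct (Req_dec (ps (S s)) 0) as [Hz|Hnz].
  - left. intro k. rewrite Hpeq. split.
    + intro H. destruct (Nat.le_gt_cases k s) as [L|L]; [exact L|]. exfalso. apply H.
      destruct (Nat.eq_dec k (S s)) as [->|Hk]; [exact Hz|]. apply (proj2 HK). lia.
    + intro L. pose proof (Hpos k L). lra.
  - right. intro k. rewrite Hpeq. split.
    + intro H. destruct (Nat.le_gt_cases k (s + 1)) as [L|L]; [exact L|]. exfalso. apply H.
      apply (proj2 HK). lia.
    + intro L. destruct (Nat.le_gt_cases k s) as [L2|L2].
      * pose proof (Hpos k L2). lra.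
      * replace k with (S s) by lia. exact Hnz.
Qed.



Lemma ev_ext {Omega : Type} (A B : Omega -> Prop) : (forall w, A w <-> B w) -> A = B.
Proof. intros H. apply functional_extensionality. intro w. apply propositional_extensionality. apply H. Qed.


Lemma F_True {Omega} (F : (Omega -> Prop) -> Prop) : sigma_algebra F -> F (fun _ => True).
Proof. intros [H _]. exact H. Qed.

Lemma F_compl {Omega} (F : (Omega -> Prop) -> Prop) A : sigma_algebra F -> F A -> F (fun w => ~ A w).
Proof. intros [_ [H _]]. apply H. Qed.

Lemma F_cunion {Omega} (F : (Omega -> Prop) -> Prop) (A : nat -> Omega -> Prop) :
  sigma_algebra F -> (forall n, F (A n)) -> F (fun w => exists n, A n w).
Proof. intros [_ [_ H]]. apply H. Qed.

Lemma F_False {Omega} (F : (Omega -> Prop) -> Prop) : sigma_algebra F -> F (fun _ => False).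
Proof.
  intros H. replace (fun _ : Omega => False) with (fun w : Omega => ~ (fun _ => True) w).
  - apply F_compl; [exact H|apply F_True; exact H].
  - apply ev_ext. intros w. tauto.
Qed.

Lemma F_union2 {Omega} (F : (Omega -> Prop) -> Prop) A B :
  sigma_algebra F -> F A -> F B -> F (fun w => A w \/ B w).
Proof.
  intros H HA HB.
  replace (fun w => A w \/ B w) with (fun w => exists n : nat, (fun n => match n with O => A | _ => B end) n w).
  - apply F_cunion; [exact H|]. intros [|n]; assumption.
  - apply ev_ext. intro w. split.
    + intros [[|n] Hn]; [left|right]; exact Hn.
    + intros [Ha|Hb]; [exists O|exists 1%nat]; assumption.
Qed.

Lemma F_inter2 {Omega} (F : (Omega -> Prop) -> Prop) A B :
  sigma_algebra F -> F A -> F B -> F (fun w => A w /\ B w).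
Proof.
  intros H HA HB.
  replace (fun w => A w /\ B w) with (fun w => ~ (fun w => (fun w => ~ A w) w \/ (fun w => ~ B w) w) w).
  - apply F_compl; [exact H|]. apply F_union2; [exact H| |]; apply F_compl; assumption.
  - apply ev_ext. intro w. tauto.
Qed.

Lemma F_cinter {Omega} (F : (Omega -> Prop) -> Prop) (A : nat -> Omega -> Prop) :
  sigma_algebra F -> (forall n, F (A n)) -> F (fun w => forall n, A n w).
Proof.
  intros H HA.
  replace (fun w => forall n, A n w) with (fun w => ~ (fun w => exists n, (fun n w => ~ A n w) n w) w).
  - apply F_compl; [exact H|]. apply F_cunion; [exact H|]. intro n. apply F_compl; auto.
  - apply ev_ext. intro w. cbv beta. split.
    + intros Hw n. apply NNPP. intro Hn. apply Hw. exists n. exact Hn.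
    + intros Hw [n Hn]. apply Hn, Hw.
Qed.

Lemma F_prop_and {Omega} (F : (Omega -> Prop) -> Prop) (Pr : Prop) A :
  sigma_algebra F -> F A -> F (fun w => Pr /\ A w).
Proof.
  intros H HA. destruct (classic Pr) as [HP|HP].
  - replace (fun w => Pr /\ A w) with A; [exact HA|]. apply ev_ext. intro w. tauto.
  - replace (fun w => Pr /\ A w) with (fun _ : Omega => False); [apply F_False; exact H|].
    apply ev_ext. intro w. tauto.
Qed.

Lemma const_series_0 (c l : R) : infinite_sum (fun _ => c) l -> c = 0.
Proof.
  intros Hl. pose proof (terms_to_0 _ _ Hl) as Ht.
  destruct (Req_dec c 0) as [H|H]; [exact H|]. exfalso.
  destruct (Ht (Rabs c)) as [N HN]; [apply Rabs_pos_lt; exact H|].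
  specialize (HN N (le_n _)). lra.
Qed.

Lemma P_empty {Omega} F (P : (Omega -> Prop) -> R) : is_prob_space F P -> P (fun _ => False) = 0.
Proof.
  intros [HF [_ [_ Hadd]]].
  specialize (Hadd (fun _ _ => False) (fun _ => F_False F HF) ltac:(tauto)).
  apply (const_series_0 _ _ Hadd).
Qed.

Lemma P_add2 {Omega} F (P : (Omega -> Prop) -> R) A B : is_prob_space F P ->
  F A -> F B -> (forall w, A w -> B w -> False) -> P (fun w => A w \/ B w) = P A + P B.
Proof.
  intros HP HA HB Hd. pose proof (P_empty F P HP) as H0.
  destruct HP as [HF [_ [_ Hadd]]].
  set (C := fun n : nat => match n with O => A | 1%nat => B | _ => fun _ => False end).
  assert (HC : forall n, F (C n)) by (intros [|[|n]]; simpl; auto; apply F_False; exact HF).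
  assert (HCd : forall n m w, n <> m -> C n w -> C m w -> False).
  { intros [|[|n]] [|[|m]] w Hnm; simpl; try tauto; intros; eauto. }
  specialize (Hadd C HC HCd).
  replace (fun w => exists n, C n w) with (fun w => A w \/ B w) in Hadd.
  - rewrite (uniqueness_sum _ _ _ Hadd (inf_sum_fin (fun n => P (C n)) 1%nat ltac:(intros [|[|i]] Hi; [lia|lia|exact H0]))).
    simpl. ring.
  - apply ev_ext. intro w. split.
    + intros [Ha|Hb]; [exists O|exists 1%nat]; assumption.
    + intros [[|[|n]] Hn]; simpl in Hn; tauto.
Qed.


Ltac btauto := intros; cbv beta in *; tauto.

Lemma P_nonneg {Omega} F (P : (Omega -> Prop) -> R) A : is_prob_space F P -> F A -> 0 <= P A.
Proof. intros [_ [H _]] HA. apply H, HA. Qed.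

Lemma P_compl {Omega} F (P : (Omega -> Prop) -> R) A : is_prob_space F P -> F A ->
  P (fun w => ~ A w) = 1 - P A.
Proof.
  intros HP HA. pose proof HP as [HF [_ [H1 _]]].
  pose proof (P_add2 F P A (fun w => ~ A w) HP HA (F_compl F A HF HA) ltac:(btauto)) as H. cbv beta in H.
  replace (fun w => A w \/ ~ A w) with (fun _ : Omega => True) in H.
  - lra.
  - apply ev_ext. intro w. pose proof (classic (A w)). tauto.
Qed.

Lemma P_mono {Omega} F (P : (Omega -> Prop) -> R) A B : is_prob_space F P -> F A -> F B ->
  (forall w, A w -> B w) -> P A <= P B.
Proof.
  intros HP HA HB Hs. pose proof HP as [HF _].
  assert (HC : F (fun w => B w /\ ~ A w)) by (apply F_inter2; auto; apply F_compl; auto).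
  pose proof (P_add2 F P A (fun w => B w /\ ~ A w) HP HA HC ltac:(btauto)) as H. cbv beta in H.
  replace (fun w => A w \/ (B w /\ ~ A w)) with B in H.
  - pose proof (P_nonneg F P _ HP HC). lra.
  - apply ev_ext. intro w. pose proof (classic (A w)). pose proof (Hs w). tauto.
Qed.

Lemma P_le1 {Omega} F (P : (Omega -> Prop) -> R) A : is_prob_space F P -> F A -> P A <= 1.
Proof.
  intros HP HA. pose proof HP as [HF [_ [H1 _]]]. rewrite <- H1.
  apply (P_mono F P); auto. apply F_True; exact HF.
Qed.

Lemma P_subadd {Omega} F (P : (Omega -> Prop) -> R) (A : nat -> Omega -> Prop) (c : R) :
  is_prob_space F P -> (forall n, F (A n)) ->
  (forall M, sum_f_R0 (fun n => P (A n)) M <= c) -> P (fun w => exists n, A n w) <= c.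
Proof.
  intros HP HA Hc. pose proof HP as [HF [_ [_ Hadd]]].
  set (A' := fun n w => A n w /\ ~ (exists k, (k < n)%nat /\ A k w)).
  assert (HA' : forall n, F (A' n)).
  { intro n. apply F_inter2; auto. apply F_compl; auto. apply F_cunion; auto.
    intro k. apply F_prop_and; auto. }
  assert (Hd : forall n m w, n <> m -> A' n w -> A' m w -> False).
  { unfold A'. cbv beta. intros n m w Hnm [Hn Hn'] [Hm Hm']. destruct (Nat.lt_total n m) as [L|[L|L]]; [|lia|].
    - apply Hm'. exists n. auto.
    - apply Hn'. exists m. auto. }
  specialize (Hadd A' HA' Hd).
  replace (fun w => exists n, A' n w) with (fun w => exists n, A n w) in Hadd.
  - apply (cv_le _ _ _ O Hadd). intros M _. eapply Rle_trans; [|apply (Hc M)].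
    apply sum_Rle. intros n _. apply (P_mono F P); auto. intros w [H _]. exact H.
  - apply ev_ext. intro w. split.
    + intros [n Hn]. revert Hn. induction n as [n IH] using (well_founded_induction Wf_nat.lt_wf).
      intro Hn. destruct (classic (exists k, (k < n)%nat /\ A k w)) as [[k [Hk1 Hk2]]|Hno].
      * exact (IH k Hk1 Hk2).
      * exists n. split; assumption.
    + intros [n [Hn _]]. exists n. exact Hn.
Qed.

Lemma P_inter1 {Omega} F (P : (Omega -> Prop) -> R) A B : is_prob_space F P -> F A -> F B ->
  P A = 1 -> P B = 1 -> P (fun w => A w /\ B w) = 1.
Proof.
  intros HP HA HB H1 H2. pose proof HP as [HF _].
  assert (HAB : F (fun w => A w /\ B w)) by (apply F_inter2; auto).
  assert (HnA := F_compl F A HF HA). assert (HnB := F_compl F B HF HB).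
  assert (HC : F (fun w => ~ B w /\ A w)) by (apply F_inter2; auto).
  pose proof (P_add2 F P _ _ HP HnA HC ltac:(btauto)) as Hu. cbv beta in Hu.
  rewrite (P_compl F P) in Hu by auto.
  assert (P (fun w => ~ B w /\ A w) <= P (fun w => ~ B w)) by (apply (P_mono F P); auto; btauto).
  rewrite (P_compl F P) in H by auto.
  assert (P (fun w => ~ (A w /\ B w)) <= P (fun w => ~ A w \/ (~ B w /\ A w))).
  { apply (P_mono F P); auto. apply F_compl; auto. apply F_union2; auto.
    intros w Hw. destruct (classic (A w)); tauto. }
  rewrite (P_compl F P) in H0 by auto.
  pose proof (P_le1 F P _ HP HAB). lra.
Qed.


Definition upd (c : nat -> nat) (n x : nat) : nat -> nat :=
  fun i => if Nat.eqb i n then x else c i.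

Lemma upd_eq c n x : upd c n x n = x.
Proof. unfold upd. rewrite Nat.eqb_refl. reflexivity. Qed.

Lemma upd_neq c n x i : i <> n -> upd c n x i = c i.
Proof. intros H. unfold upd. apply Nat.eqb_neq in H. rewrite H. reflexivity. Qed.

Fixpoint Sumc (s n : nat) (g : (nat -> nat) -> R) : R :=
  match n with
  | O => g (fun _ => O)
  | S k => Sumc s k (fun c => sum_f_R0 (fun x => g (upd c k x)) s)
  end.

Definition wt (p0 : nat -> R) (n : nat) (c : nat -> nat) : R := prodR (fun i => p0 (c i)) n.

Definition ind (Q : Prop) : R := if excluded_middle_informative Q then 1 else 0.

Definition depP (n : nat) (Q : (nat -> nat) -> Prop) : Prop :=
  forall c c', (forall i, (i < n)%nat -> c i = c' i) -> (Q c <-> Q c').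

Lemma Sumc_ext s n g h : (forall c, g c = h c) -> Sumc s n g = Sumc s n h.
Proof. intros H. replace g with h; [reflexivity|]. apply functional_extensionality. intro; symmetry; auto. Qed.

Lemma Sumc_plus s n : forall g h, Sumc s n (fun c => g c + h c) = Sumc s n g + Sumc s n h.
Proof.
  induction n as [|n IH]; intros g h; simpl; [reflexivity|].
  rewrite <- IH. apply Sumc_ext. intro c. apply sum_plus.
Qed.

Lemma Sumc_scal s n : forall a g, Sumc s n (fun c => a * g c) = a * Sumc s n g.
Proof.
  induction n as [|n IH]; intros a g; simpl; [reflexivity|].
  rewrite <- IH. apply Sumc_ext. intro c. rewrite scal_sum. apply sum_eq. intros. ring.
Qed.

Lemma Sumc_mono s n : forall g h, (forall c, g c <= h c) -> Sumc s n g <= Sumc s n h.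
Proof.
  induction n as [|n IH]; intros g h H; simpl; [apply H|].
  apply IH. intro c. apply sum_Rle. intros. apply H.
Qed.

Lemma Sumc_zero s n : Sumc s n (fun _ => 0) = 0.
Proof.
  induction n as [|n IH]; simpl; [reflexivity|].
  transitivity (Sumc s n (fun _ => 0)); [|exact IH].
  apply Sumc_ext. intro c. rewrite sum_cte. ring.
Qed.

Lemma Sumc_sum s n (h : nat -> (nat -> nat) -> R) m :
  Sumc s n (fun c => sum_f_R0 (fun x => h x c) m) = sum_f_R0 (fun x => Sumc s n (h x)) m.
Proof.
  induction m as [|m IH]; simpl; [reflexivity|].
  rewrite Sumc_plus, IH. reflexivity.
Qed.

Lemma prodR_ext f g m : (forall i, (i < m)%nat -> f i = g i) -> prodR f m = prodR g m.
Proof.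
  induction m as [|m IH]; intros H; simpl; [reflexivity|].
  rewrite IH by (intros; apply H; lia). rewrite H by lia. reflexivity.
Qed.

Lemma wt_upd p0 n c x : wt p0 (S n) (upd c n x) = wt p0 n c * p0 x.
Proof.
  unfold wt. simpl. rewrite upd_eq. f_equal. apply prodR_ext. intros i Hi.
  rewrite upd_neq by lia. reflexivity.
Qed.

Lemma wt_nonneg p0 n c : (forall k, 0 <= p0 k) -> 0 <= wt p0 n c.
Proof.
  intros H. unfold wt. induction n as [|n IH]; simpl; [lra|]. specialize (H (c n)). nra.
Qed.

Lemma wt_sum1 p0 s n : sum_f_R0 p0 s = 1 -> Sumc s n (wt p0 n) = 1.
Proof.
  intros H1. induction n as [|n IH]; [reflexivity|]. simpl Sumc.
  rewrite <- IH. apply Sumc_ext. intro c. rewrite (sum_eq _ (fun x => p0 x * wt p0 n c)).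
  - rewrite <- scal_sum, H1. ring.
  - intros x _. rewrite wt_upd. ring.
Qed.

Lemma prod_ones (f : nat -> R) n m : (m <= n)%nat ->
  prodR (fun i => if (i <? n)%nat then 1 else f i) m = 1.
Proof.
  induction m as [|m IH]; intros H; simpl; [reflexivity|].
  rewrite IH by lia. destruct (Nat.ltb_spec m n); [ring|lia].
Qed.

Lemma prod_split p0 d n x m : (n < m)%nat ->
  prodR (fun i => if (i <? n)%nat then 1 else p0 (upd d n x i)) m =
  p0 x * prodR (fun i => if (i <? S n)%nat then 1 else p0 (d i)) m.
Proof.
  induction m as [|m IH]; intros H; [lia|].
  simpl prodR. destruct (Nat.eq_dec m n) as [->|Hmn].
  - rewrite prod_ones by lia. rewrite prod_ones by lia.
    destruct (Nat.ltb_spec n n); [lia|]. destruct (Nat.ltb_spec n (S n)); [|lia].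
    rewrite upd_eq. ring.
  - rewrite IH by lia. destruct (Nat.ltb_spec m n); [lia|]. destruct (Nat.ltb_spec m (S n)); [lia|].
    rewrite upd_neq by lia. ring.
Qed.

Lemma depP_upd n Q x : depP (S n) Q -> depP n (fun c => Q (upd c n x)).
Proof.
  intros H c c' Hc. apply H. intros i Hi. unfold upd.
  destruct (Nat.eqb_spec i n); [reflexivity|]. apply Hc. lia.
Qed.

Lemma upd_self c n : forall i, upd c n (c n) i = c i.
Proof. intro i. unfold upd. destruct (Nat.eqb_spec i n); subst; reflexivity. Qed.

Lemma meas_dep {Omega} (F : (Omega -> Prop) -> Prop) (X : nat -> Omega -> nat) :
  sigma_algebra F -> (forall i j, F (fun w => X i w = j)) ->
  forall n Q, depP n Q -> F (fun w => Q (fun i => X i w)).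
Proof.
  intros HF HX n. induction n as [|n IH]; intros Q HQ.
  - destruct (classic (Q (fun _ => O))) as [H|H].
    + replace (fun w => Q (fun i => X i w)) with (fun _ : Omega => True); [apply F_True; exact HF|].
      apply ev_ext. intro w. split; [|tauto]. intros _. apply (HQ (fun _ => O)); [intros; lia|exact H].
    + replace (fun w => Q (fun i => X i w)) with (fun _ : Omega => False); [apply F_False; exact HF|].
      apply ev_ext. intro w. split; [tauto|]. intros H2. apply H.
      apply (HQ (fun i => X i w)); [intros; lia|exact H2].
  - replace (fun w => Q (fun i => X i w)) with
      (fun w => exists x, (fun x w => X n w = x /\ (fun c => Q (upd c n x)) (fun i => X i w)) x w).
    + apply F_cunion; [exact HF|]. intro x. apply F_inter2; [exact HF|apply HX|].
      apply (IH (fun c => Q (upd c n x))). apply depP_upd. exact HQ.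
    + apply ev_ext. intro w. cbv beta. split.
      * intros [x [Hx HQx]]. subst x. apply (HQ _ _ (fun i _ => eq_sym (upd_self (fun i => X i w) n i))).
        exact HQx.
      * intros H. exists (X n w). split; [reflexivity|].
        apply (HQ _ _ (fun i _ => upd_self (fun i => X i w) n i)). exact H.
Qed.


Lemma ind_true (Q : Prop) : Q -> ind Q = 1.
Proof. intros H. unfold ind. destruct (excluded_middle_informative Q); tauto. Qed.
Lemma ind_false (Q : Prop) : ~ Q -> ind Q = 0.
Proof. intros H. unfold ind. destruct (excluded_middle_informative Q); tauto. Qed.

Lemma P_cyl {Omega} F (P : (Omega -> Prop) -> R) (X : nat -> Omega -> nat) (p0 : nat -> R) (s : nat) :
  is_prob_space F P -> iid_with_pmf F P X p0 -> (forall x, (s < x)%nat -> p0 x = 0) ->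
  forall n Q, depP n Q -> forall m d, (n <= m)%nat ->
  P (fun w => Q (fun i => X i w) /\ forall i, (n <= i)%nat -> (i < m)%nat -> X i w = d i) =
  Sumc s n (fun c => ind (Q c) * wt p0 n c) *
  prodR (fun i => if (i <? n)%nat then 1 else p0 (d i)) m.
Proof.
  intros HP [HXm HXp] Hz n. pose proof HP as [HF [_ [_ Hadd]]].
  induction n as [|n IH]; intros Q HQ m d Hnm.
  - simpl Sumc. unfold wt. simpl prodR.
    destruct (classic (Q (fun _ => O))) as [H|H].
    + rewrite ind_true by exact H. rewrite <- HXp. rewrite !Rmult_1_l. f_equal. apply ev_ext. intro w. split.
      * intros [_ Hw] i Hi. apply Hw; lia.
      * intros Hw. split; [|intros; apply Hw; lia].
        apply (HQ (fun _ => O)); [intros; lia|exact H].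
    + rewrite ind_false by exact H.
      replace (fun w => Q (fun i => X i w) /\ _) with (fun _ : Omega => False).
      * rewrite (P_empty F P HP). ring.
      * apply ev_ext. intro w. split; [tauto|]. intros [H2 _]. apply H.
        apply (HQ (fun i => X i w)); [intros; lia|exact H2].
  - set (A := fun x w => (fun c => Q (upd c n x)) (fun i => X i w) /\
                         forall i, (n <= i)%nat -> (i < m)%nat -> X i w = upd d n x i).
    assert (HA : forall x, F (A x)).
    { intro x. unfold A.
      apply (meas_dep F X HF HXm m (fun c => Q (upd c n x) /\
               forall i, (n <= i)%nat -> (i < m)%nat -> c i = upd d n x i)).
      intros c c' Hc. split.
      - intros [H1 H2]. split.
        + apply (depP_upd n Q x HQ c c'); [intros; apply Hc; lia|exact H1].
        + intros i Hi1 Hi2. rewrite <- Hc by lia. apply H2; lia.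
      - intros [H1 H2]. split.
        + apply (depP_upd n Q x HQ c c'); [intros; apply Hc; lia|exact H1].
        + intros i Hi1 Hi2. rewrite Hc by lia. apply H2; lia. }
    assert (HAd : forall x y w, x <> y -> A x w -> A y w -> False).
    { intros x y w Hxy [_ Hx] [_ Hy]. apply Hxy.
      specialize (Hx n (le_n _) ltac:(lia)). specialize (Hy n (le_n _) ltac:(lia)).
      rewrite upd_eq in Hx, Hy. congruence. }
    specialize (Hadd A HA HAd).
    replace (fun w => exists x, A x w) with
      (fun w => Q (fun i => X i w) /\ forall i, (S n <= i)%nat -> (i < m)%nat -> X i w = d i) in Hadd.
    2:{ apply ev_ext. intro w. unfold A. cbv beta. split.
      - intros [H1 H2]. exists (X n w). split.
        + apply (HQ _ _ (fun i _ => upd_self (fun i => X i w) n i)). exact H1.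
        + intros i Hi1 Hi2. destruct (Nat.eq_dec i n) as [->|Hin].
          * rewrite upd_eq. reflexivity.
          * rewrite upd_neq by exact Hin. apply H2; lia.
      - intros [x [H1 H2]].
        assert (Hxn : X n w = x) by (rewrite (H2 n (le_n _) ltac:(lia)); apply upd_eq).
        split.
        + subst x. apply (HQ _ _ (fun i _ => eq_sym (upd_self (fun i => X i w) n i))). exact H1.
        + intros i Hi1 Hi2. rewrite (H2 i ltac:(lia) Hi2). apply upd_neq. lia. }
    set (T := prodR (fun i => if (i <? S n)%nat then 1 else p0 (d i)) m).
    set (G := fun x => Sumc s n (fun c => ind (Q (upd c n x)) * wt p0 n c)).
    assert (HPA : forall x, P (A x) = G x * (p0 x * T)).
    { intro x. unfold A, G, T. rewrite <- (prod_split p0 d n x m) by lia.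
      rewrite <- IH by (try apply depP_upd; auto; lia). reflexivity. }
    replace (fun x => P (A x)) with (fun x => G x * (p0 x * T)) in Hadd
      by (apply functional_extensionality; intro; symmetry; apply HPA).
    rewrite (uniqueness_sum _ _ _ Hadd (inf_sum_fin (fun x => G x * (p0 x * T)) s ltac:(intros x Hx; cbv beta; rewrite Hz by exact Hx; ring))).
    simpl Sumc.
    rewrite (Sumc_ext s n _ (fun c => sum_f_R0 (fun x => p0 x * (ind (Q (upd c n x)) * wt p0 n c)) s)).
    2:{ intro c. apply sum_eq. intros x _. rewrite wt_upd. ring. }
    rewrite Sumc_sum. rewrite (Rmult_comm (sum_f_R0 _ s) T), scal_sum. apply sum_eq. intros x _.
    rewrite Sumc_scal. fold (G x). ring.
Qed.

Lemma P_dep {Omega} F (P : (Omega -> Prop) -> R) (X : nat -> Omega -> nat) (p0 : nat -> R) (s : nat) :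
  is_prob_space F P -> iid_with_pmf F P X p0 -> (forall x, (s < x)%nat -> p0 x = 0) ->
  forall n Q, depP n Q ->
  P (fun w => Q (fun i => X i w)) = Sumc s n (fun c => ind (Q c) * wt p0 n c).
Proof.
  intros HP HX Hz n Q HQ.
  pose proof (P_cyl F P X p0 s HP HX Hz n Q HQ n (fun _ => O) (le_n _)) as H.
  rewrite prod_ones in H by lia. rewrite Rmult_1_r in H. rewrite <- H. f_equal.
  apply ev_ext. intro w. split; [intros H1; split; [exact H1|intros; lia]|tauto].
Qed.


Fixpoint cnt (c : nat -> nat) (n j : nat) : nat :=
  match n with
  | O => O
  | S m => (cnt c m j + (if Nat.eqb (c m) j then 1 else 0))%nat
  end.

Definition Dv (c : nat -> nat) (n j : nat) (p : R) : R := INR (cnt c n j) - INR n * p.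

Lemma cnt_agree c c' n j : (forall i, (i < n)%nat -> c i = c' i) -> cnt c n j = cnt c' n j.
Proof.
  induction n as [|n IH]; intros H; simpl; [reflexivity|].
  rewrite IH by (intros; apply H; lia). rewrite H by lia. reflexivity.
Qed.

Definition zz (j : nat) (p : R) (x : nat) : R := (if Nat.eqb x j then 1 else 0) - p.

Lemma Dv_upd c n x j p : Dv (upd c n x) (S n) j p = Dv c n j p + zz j p x.
Proof.
  unfold Dv, zz. simpl cnt. rewrite upd_eq.
  rewrite (cnt_agree (upd c n x) c n j) by (intros; apply upd_neq; lia).
  rewrite plus_INR, S_INR. destruct (Nat.eqb x j); simpl; ring.
Qed.

Lemma mom_step p0 s n j p (Fn : R -> R) :
  Sumc s (S n) (fun c => wt p0 (S n) c * Fn (Dv c (S n) j p)) =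
  Sumc s n (fun c => wt p0 n c * sum_f_R0 (fun x => p0 x * Fn (Dv c n j p + zz j p x)) s).
Proof.
  simpl Sumc. apply Sumc_ext. intro c. rewrite scal_sum. apply sum_eq. intros x _.
  rewrite wt_upd, Dv_upd. ring.
Qed.

Lemma sum_delta (f : nat -> R) j N :
  sum_f_R0 (fun x => f x * (if Nat.eqb x j then 1 else 0)) N = if (j <=? N)%nat then f j else 0.
Proof.
  induction N as [|N IH].
  - simpl. destruct j; simpl; ring.
  - rewrite tech5, IH. destruct (Nat.eqb_spec (S N) j) as [<-|H].
    + destruct (Nat.leb_spec (S N) N); [lia|]. rewrite Nat.leb_refl. ring.
    + destruct (Nat.leb_spec j N); destruct (Nat.leb_spec j (S N)); try lia; ring.
Qed.

Section Mom.
End Mom.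

Lemma moments p0 s j (Hnn : forall k, 0 <= p0 k) (H1 : sum_f_R0 p0 s = 1) (Hj : (j <= s)%nat) :
  forall n,
  Sumc s n (fun c => wt p0 n c * Dv c n j (p0 j)) = 0 /\
  Sumc s n (fun c => wt p0 n c * Dv c n j (p0 j) ^ 2) <= INR n /\
  Sumc s n (fun c => wt p0 n c * Dv c n j (p0 j) ^ 4) <= 3 * INR n ^ 2.
Proof.
  set (p := p0 j).
  assert (Hp1 : p <= 1).
  { rewrite <- H1. unfold p. apply (term_le_sum p0 j s Hnn Hj). }
  assert (Hp0 : 0 <= p) by apply Hnn.
  set (Z1 := sum_f_R0 (fun x => p0 x * zz j p x) s).
  set (Z2 := sum_f_R0 (fun x => p0 x * zz j p x ^ 2) s).
  set (Z3 := sum_f_R0 (fun x => p0 x * zz j p x ^ 3) s).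
  set (Z4 := sum_f_R0 (fun x => p0 x * zz j p x ^ 4) s).
  assert (HZ1 : Z1 = 0).
  { unfold Z1, zz. rewrite (sum_eq _ (fun x => p0 x * (if Nat.eqb x j then 1 else 0) - p0 x * p))
      by (intros; ring).
    rewrite minus_sum, sum_delta. destruct (Nat.leb_spec j s); [|lia].
    rewrite <- scal_sum, H1. unfold p. ring. }
  assert (Hzb : forall x, zz j p x ^ 2 <= 1).
  { intro x. unfold zz. destruct (Nat.eqb x j); nra. }
  assert (HZ2 : Z2 <= 1).
  { rewrite <- H1. apply sum_Rle. intros x _. cbv beta. specialize (Hzb x). specialize (Hnn x). nra. }
  assert (HZ2' : 0 <= Z2).
  { apply cond_pos_sum. intro x. cbv beta. specialize (Hnn x). pose proof (pow2_ge_0 (zz j p x)). nra. }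
  assert (HZ4 : Z4 <= 1).
  { rewrite <- H1. apply sum_Rle. intros x _. cbv beta. specialize (Hzb x). specialize (Hnn x).
    pose proof (pow2_ge_0 (zz j p x)).
    replace (zz j p x ^ 4) with ((zz j p x ^ 2) ^ 2) by ring. assert (Hq : (zz j p x ^ 2) ^ 2 <= 1) by nra. nra. }
  assert (HZ4' : 0 <= Z4).
  { apply cond_pos_sum. intro x. cbv beta. specialize (Hnn x). pose proof (pow2_ge_0 (zz j p x ^ 2)).
    replace (zz j p x ^ 4) with ((zz j p x ^ 2) ^ 2) by ring. nra. }
  assert (E1 : forall y, sum_f_R0 (fun x => p0 x * (y + zz j p x)) s = y * sum_f_R0 p0 s + Z1).
  { intro y. unfold Z1. rewrite scal_sum, <- sum_plus. apply sum_eq. intros. ring. }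
  assert (E2 : forall y, sum_f_R0 (fun x => p0 x * (y + zz j p x) ^ 2) s =
                  y ^ 2 * sum_f_R0 p0 s + 2 * y * Z1 + Z2).
  { intro y. unfold Z1, Z2. rewrite !scal_sum, <- !sum_plus. apply sum_eq. intros. ring. }
  assert (E4 : forall y, sum_f_R0 (fun x => p0 x * (y + zz j p x) ^ 4) s =
                  y ^ 4 * sum_f_R0 p0 s + 4 * y ^ 3 * Z1 + 6 * y ^ 2 * Z2 + 4 * y * Z3 + Z4).
  { intro y. unfold Z1, Z2, Z3, Z4. rewrite !scal_sum, <- !sum_plus. apply sum_eq. intros. ring. }
  assert (M0 : forall n, Sumc s n (fun c => wt p0 n c) = 1) by (intro n; apply wt_sum1; exact H1).
  induction n as [|n [IH1 [IH2 IH4]]].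
  - simpl. unfold Dv, wt. simpl. split; [ring|]. split; lra.
  - pose proof (mom_step p0 s n j p (fun y => y)) as S1. cbv beta in S1.
    pose proof (mom_step p0 s n j p (fun y => y ^ 2)) as S2. cbv beta in S2.
    pose proof (mom_step p0 s n j p (fun y => y ^ 4)) as S4. cbv beta in S4.
    rewrite (Sumc_ext s n _ (fun c => wt p0 n c * Dv c n j p)) in S1
      by (intro c; rewrite E1, H1, HZ1; ring).
    rewrite (Sumc_ext s n _ (fun c => wt p0 n c * Dv c n j p ^ 2 + Z2 * wt p0 n c)) in S2
      by (intro c; rewrite E2, H1, HZ1; ring).
    rewrite (Sumc_ext s n _ (fun c => wt p0 n c * Dv c n j p ^ 4 +
               ((6 * Z2) * (wt p0 n c * Dv c n j p ^ 2) + ((4 * Z3) * (wt p0 n c * Dv c n j p)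
                + Z4 * wt p0 n c)))) in S4
      by (intro c; rewrite E4, H1, HZ1; ring).
    rewrite !Sumc_plus, !Sumc_scal, M0 in S2. rewrite !Sumc_plus, !Sumc_scal, M0 in S4.
    fold p in IH1, IH2, IH4.
    rewrite S1, S2, S4, IH1. rewrite S_INR. split; [reflexivity|]. split; [nra|].
    pose proof (pos_INR n). nra.
Qed.


Definition Bad (p0 : nat -> R) (s : nat) (eta : R) (n : nat) (c : nat -> nat) : Prop :=
  exists j, (j <= s)%nat /\ INR n * eta <= Rabs (Dv c n j (p0 j)).

Lemma Bad_dep p0 s eta n : depP n (Bad p0 s eta n).
Proof.
  intros c c' H. unfold Bad, Dv.
  split; intros [j [Hj Hb]]; exists j; split; auto.
  - rewrite <- (cnt_agree c c' n j H). exact Hb.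
  - rewrite (cnt_agree c c' n j H). exact Hb.
Qed.

Lemma cheb p0 s eta (Hnn : forall k, 0 <= p0 k) (H1 : sum_f_R0 p0 s = 1) (Heta : 0 < eta) n :
  (1 <= n)%nat ->
  Sumc s n (fun c => ind (Bad p0 s eta n c) * wt p0 n c) <=
  INR (S s) * 3 / eta ^ 4 / INR n ^ 2.
Proof.
  intros Hn.
  assert (Hn0 : 1 <= INR n) by (apply (le_INR 1 n) in Hn; simpl in Hn; lra).
  set (K := (INR n * eta) ^ 4).
  assert (HK : 0 < K) by (unfold K; apply pow_lt; nra).
  eapply Rle_trans.
  { apply (Sumc_mono s n _ (fun c => wt p0 n c * sum_f_R0 (fun j => Dv c n j (p0 j) ^ 4 / K) s)).
    intro c. pose proof (wt_nonneg p0 n c Hnn) as Hw.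
    assert (HS : 0 <= sum_f_R0 (fun j => Dv c n j (p0 j) ^ 4 / K) s).
    { apply cond_pos_sum. intro j. unfold Rdiv. apply Rmult_le_pos; [|left; apply Rinv_0_lt_compat; exact HK].
      replace (Dv c n j (p0 j) ^ 4) with ((Dv c n j (p0 j) ^ 2) ^ 2) by ring. apply pow2_ge_0. }
    destruct (classic (Bad p0 s eta n c)) as [HB|HB].
    - rewrite ind_true by exact HB. destruct HB as [j [Hj Hb]].
      assert (Ht : 1 <= Dv c n j (p0 j) ^ 4 / K).
      { set (D := Dv c n j (p0 j)) in *.
        assert (D ^ 4 = Rabs D ^ 4).
        { replace (D ^ 4) with ((D ^ 2) ^ 2) by ring. replace (Rabs D ^ 4) with ((Rabs D ^ 2) ^ 2) by ring.
          rewrite <- (pow2_abs D). reflexivity. }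
        assert (K <= D ^ 4).
        { rewrite H. unfold K. apply pow_incr. split; [nra|exact Hb]. }
        unfold Rdiv. apply (Rmult_le_reg_r K); [exact HK|]. rewrite Rmult_assoc, Rinv_l by lra. lra. }
      pose proof (term_le_sum (fun j => Dv c n j (p0 j) ^ 4 / K) j s) as Ht2.
      assert (1 <= sum_f_R0 (fun j => Dv c n j (p0 j) ^ 4 / K) s).
      { eapply Rle_trans; [exact Ht|]. apply Ht2; [|exact Hj]. intro k. unfold Rdiv.
        apply Rmult_le_pos; [|left; apply Rinv_0_lt_compat; exact HK].
        replace (Dv c n k (p0 k) ^ 4) with ((Dv c n k (p0 k) ^ 2) ^ 2) by ring. apply pow2_ge_0. }
      nra.
    - rewrite ind_false by exact HB. nra. }
  rewrite (Sumc_ext s n _ (fun c => sum_f_R0 (fun j => / K * (wt p0 n c * Dv c n j (p0 j) ^ 4)) s)).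
  2:{ intro c. rewrite scal_sum. apply sum_eq. intros. unfold Rdiv. ring. }
  rewrite Sumc_sum.
  eapply Rle_trans.
  { apply (sum_Rle _ (fun _ => / K * (3 * INR n ^ 2))). intros j Hj. rewrite Sumc_scal.
    apply Rmult_le_compat_l; [left; apply Rinv_0_lt_compat; exact HK|].
    apply (moments p0 s j Hnn H1 Hj n). }
  rewrite sum_cte. unfold K. right. field. split; lra.
Qed.

Lemma telesc c1 N M : (2 <= N)%nat ->
  sum_f_R0 (fun k => if (N <=? k)%nat then c1 * (/ INR (k - 1) - / INR k) else 0) M =
  c1 * (/ INR (N - 1) - / INR (max M (N - 1))).
Proof.
  intros HN. induction M as [|M IH].
  - simpl. destruct (Nat.leb_spec N 0); [lia|]. replace (max 0 (N - 1)) with (N - 1)%nat by lia. ring.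
  - rewrite tech5, IH. destruct (Nat.leb_spec N (S M)) as [L|L].
    + replace (max M (N - 1)) with M by lia. replace (max (S M) (N - 1)) with (S M) by lia.
      replace (S M - 1)%nat with M by lia. ring.
    + replace (max M (N - 1)) with (N - 1)%nat by lia. replace (max (S M) (N - 1)) with (N - 1)%nat by lia. ring.
Qed.

Lemma count_cnt {Omega} (X : nat -> Omega -> nat) w n j : count_obs X w n j = cnt (fun i => X i w) n j.
Proof. induction n as [|n IH]; simpl; [reflexivity|]. rewrite IH. reflexivity. Qed.

Lemma cnt_out c n i s : (forall k, (c k <= s)%nat) -> (s < i)%nat -> cnt c n i = O.
Proof.
  intros Hc Hi. induction n as [|n IH]; simpl; [reflexivity|]. rewrite IH.
  destruct (Nat.eqb_spec (c n) i) as [E|E]; [specialize (Hc n); lia|reflexivity].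
Qed.


Theorem prob_main {Omega} F (P : (Omega -> Prop) -> R) (X : nat -> Omega -> nat) (p0 : nat -> R) (s : nat) :
  is_prob_space F P -> iid_with_pmf F P X p0 -> (forall k, 0 <= p0 k) ->
  (forall x, (s < x)%nat -> p0 x = 0) -> sum_f_R0 p0 s = 1 ->
  forall eta, 0 < eta -> exists E, F E /\ P E = 1 /\ forall w, E w ->
    exists n0, forall n, (n0 <= n)%nat ->
      (forall i, (s < i)%nat -> empirical X w n i = 0) /\
      (forall i, (i <= s)%nat -> Rabs (empirical X w n i - p0 i) < eta).
Proof.
  intros HP HX Hnn Hz H1 eta Heta.
  pose proof HP as [HF [Hpos [HT Hadd]]]. pose proof HX as [HXm HXp].
  set (B := fun n w => Bad p0 s eta n (fun i => X i w)).
  assert (HBm : forall n, F (B n)) by (intro n; apply (meas_dep F X HF HXm n), Bad_dep).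
  set (c1 := INR (S s) * 3 / eta ^ 4).
  assert (Hc1 : 0 <= c1).
  { unfold c1. unfold Rdiv. apply Rmult_le_pos; [pose proof (pos_INR (S s)); lra|].
    left. apply Rinv_0_lt_compat. apply pow_lt. exact Heta. }
  assert (HPB : forall n, (1 <= n)%nat -> P (B n) <= c1 / INR n ^ 2).
  { intros n Hn. unfold B. rewrite (P_dep F P X p0 s HP HX Hz n) by apply Bad_dep.
    apply cheb; auto. }
  set (Good := fun w => exists N, forall n, (N <= n)%nat -> ~ B n w).
  assert (HGm : F Good).
  { apply F_cunion; [exact HF|]. intro N.
    apply F_cinter; [exact HF|]. intro n.
    replace (fun w => (N <= n)%nat -> ~ B n w) with (fun w => ~ ((N <= n)%nat /\ B n w)).
    - apply F_compl; [exact HF|]. apply F_prop_and; auto.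
    - apply ev_ext. intro w. tauto. }
  assert (HGN : forall N, (2 <= N)%nat -> 1 - c1 / INR (N - 1) <= P Good).
  { intros N HN.
    set (A := fun k w => (N <= k)%nat /\ B k w).
    assert (HAm : forall k, F (A k)) by (intro k; apply F_prop_and; auto).
    assert (HU : P (fun w => exists k, A k w) <= c1 / INR (N - 1)).
    { apply (P_subadd F P A); auto. intro M.
      eapply Rle_trans.
      { apply (sum_Rle _ (fun k => if (N <=? k)%nat then c1 * (/ INR (k - 1) - / INR k) else 0)).
        intros k _. destruct (Nat.leb_spec N k) as [L|L].
        - replace (A k) with (B k) by (apply ev_ext; intro w; unfold A; tauto).
          eapply Rle_trans; [apply HPB; lia|].
          assert (Hk1 : 1 <= INR (k - 1)) by (apply (le_INR 1); lia).
          assert (Hk : INR k = INR (k - 1) + 1) by (rewrite <- S_INR; f_equal; lia).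
          rewrite Hk. unfold Rdiv. apply Rmult_le_compat_l; [exact Hc1|].
          set (a := INR (k - 1)) in *.
          replace (/ a - / (a + 1)) with (/ (a * (a + 1))) by (field; lra).
          apply Rinv_le_contravar; [nra|]. simpl. nra.
        - replace (A k) with (fun _ : Omega => False) by (apply ev_ext; intro w; unfold A; split; [tauto|intros [H _]; lia]).
          rewrite (P_empty F P HP). lra. }
      rewrite telesc by exact HN.
      assert (0 < / INR (max M (N - 1))) by (apply Rinv_0_lt_compat; apply (lt_INR 0); lia).
      unfold Rdiv. nra. }
    assert (HAU : F (fun w => exists k, A k w)) by (apply F_cunion; auto).
    pose proof (P_compl F P _ HP HAU) as Hc.
    assert (P (fun w => ~ exists k, A k w) <= P Good).
    { apply (P_mono F P); auto. apply F_compl; auto.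
      intros w Hw. exists N. intros n Hn HBn. apply Hw. exists n. unfold A. auto. }
    lra. }
  assert (HG1 : P Good = 1).
  { pose proof (P_le1 F P Good HP HGm).
    destruct (Rle_lt_or_eq_dec _ _ H) as [Hlt|Heq]; [|exact Heq]. exfalso.
    set (gap := 1 - P Good).
    destruct (INR_archimed gap (c1 + 1)) as [N0 HN0]; [unfold gap; lra|].
    specialize (HGN (N0 + 2)%nat ltac:(lia)).
    replace (N0 + 2 - 1)%nat with (S N0) in HGN by lia. rewrite S_INR in HGN.
    assert (c1 / (INR N0 + 1) < gap).
    { pose proof (pos_INR N0). apply (Rmult_lt_reg_r (INR N0 + 1)); [lra|].
      unfold Rdiv. rewrite Rmult_assoc, Rinv_l by lra. unfold gap in *. nra. }
    unfold gap in *. lra. }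
  set (AllLe := fun w => forall i, (X i w <= s)%nat).
  assert (HLm : F AllLe).
  { apply F_cinter; [exact HF|]. intro i.
    apply (meas_dep F X HF HXm (S i) (fun c => (c i <= s)%nat)).
    intros c c' Hc. rewrite (Hc i) by lia. tauto. }
  assert (HL1 : P AllLe = 1).
  { set (U := fun w => exists i, (fun i w => ~ (X i w <= s)%nat) i w).
    assert (HUm : forall i, F (fun w => ~ (X i w <= s)%nat)).
    { intro i. apply (meas_dep F X HF HXm (S i) (fun c => ~ (c i <= s)%nat)).
      intros c c' Hc. rewrite (Hc i) by lia. tauto. }
    assert (HU0 : P U <= 0).
    { apply (P_subadd F P _ 0 HP HUm). intro M. rewrite (sum_eq _ (fun _ => 0)).
      - rewrite sum_cte. lra.
      - intros i _. rewrite (P_dep F P X p0 s HP HX Hz (S i) (fun c => ~ (c i <= s)%nat)).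
        + rewrite <- (Sumc_zero s (S i)). apply Sumc_ext. intro c.
          destruct (classic (c i <= s)%nat) as [Hle|Hgt].
          * rewrite ind_false by tauto. ring.
          * unfold wt. simpl prodR. rewrite Hz by lia. ring.
        + intros c c' Hc. rewrite (Hc i) by lia. tauto. }
    assert (HUm' : F U) by (apply F_cunion; auto).
    pose proof (Hpos U HUm').
    replace AllLe with (fun w => ~ U w).
    - rewrite (P_compl F P U HP HUm'). lra.
    - apply ev_ext. intro w. unfold U, AllLe. split.
      + intros Hn i. apply NNPP. intro Hi. apply Hn. exists i. exact Hi.
      + intros Hn [i Hi]. apply Hi, Hn. }
  exists (fun w => AllLe w /\ Good w). split; [apply F_inter2; auto|].
  split; [apply (P_inter1 F P); auto|].
  intros w [HwL [N HwG]].
  exists (max N 1). intros n Hn.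
  assert (HnR : 1 <= INR n) by (apply (le_INR 1); lia).
  split.
  - intros i Hi. unfold empirical. rewrite count_cnt, (cnt_out _ n i s HwL Hi). simpl. unfold Rdiv. ring.
  - intros i Hi. specialize (HwG n ltac:(lia)).
    assert (Hd : Rabs (Dv (fun k => X k w) n i (p0 i)) < INR n * eta).
    { destruct (Rlt_or_le (Rabs (Dv (fun k => X k w) n i (p0 i))) (INR n * eta)) as [Hl|Hl]; [exact Hl|].
      exfalso. apply HwG. exists i. auto. }
    unfold empirical. rewrite count_cnt.
    replace (INR (cnt (fun i0 => X i0 w) n i) / INR n - p0 i)
      with (Dv (fun k => X k w) n i (p0 i) / INR n) by (unfold Dv; field; lra).
    unfold Rdiv. rewrite Rabs_mult, (Rabs_right (/ INR n)) by (left; apply Rinv_0_lt_compat; lra).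
    apply (Rmult_lt_reg_r (INR n)); [lra|]. rewrite Rmult_assoc, Rinv_l by lra. lra.
Qed.


Theorem proposition4
  (p0 : nat -> R) (S : nat)
  (Hpmf : is_pmf p0) (Hconv : convex_seq p0)
  (HS : (1 <= S)%nat)
  (Hsupp : forall k, p0 k <> 0 <-> (k <= S)%nat)
  (Omega : Type) (F : (Omega -> Prop) -> Prop) (P : (Omega -> Prop) -> R)
  (HP : is_prob_space F P)
  (X : nat -> Omega -> nat) (HX : iid_with_pmf F P X p0) :
  exists E : Omega -> Prop,
    F E /\ P E = 1 /\
    forall w, E w ->
      exists n0 : nat, forall n : nat, (n0 <= n)%nat ->
        (exists p, is_LSE (empirical X w n) p) /\
        forall p, is_LSE (empirical X w n) p ->
          (forall k, support p k <-> (k <= S)%nat) \/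
          (forall k, support p k <-> (k <= S + 1)%nat).
Proof.
  destruct Hpmf as [Hnn Hsum].
  assert (Hz : forall x, (S < x)%nat -> p0 x = 0).
  { intros x Hx. destruct (Req_dec (p0 x) 0) as [H|H]; [exact H|]. apply Hsupp in H. lia. }
  assert (H1 : sum_f_R0 p0 S = 1) by exact (uniqueness_sum p0 _ _ (inf_sum_fin p0 S Hz) Hsum).
  destruct (det_main p0 S Hnn Hconv Hsupp) as [eta [Heta Hdet]].
  destruct (prob_main F P X p0 S HP HX Hnn Hz H1 eta Heta) as [E [HE [HPE HEw]]].
  exists E. split; [exact HE|]. split; [exact HPE|].
  intros w Hw. destruct (HEw w Hw) as [n0 Hn0]. exists n0. intros n Hn.
  destruct (Hn0 n Hn) as [Ha Hb]. exact (Hdet (empirical X w n) Ha Hb).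
Qed.
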